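(* Let $\mathcal{A}$ be a complex Banach algebra with identity, $\lambda$ a nonzero complex number, and $M = \begin{pmatrix} A & B \\ C & D \end{pmatrix} \in M_2(\mathcal{A})$ with $A, D \in \mathcal{A}^d$. If $$BD = \lambda A B D^\pi,\quad CA = \lambda D C A^\pi,\quad BC = 0,$$ then $M \in M_2(\mathcal{A})^d$ and $$M^d = \begin{pmatrix} A^d & 0 \\ 0 & D^d \end{pmatrix} + \sum_{n=0}^{\infty} (P^d)^{n+2} Q M^n,$$ where $P = \begin{pmatrix} A & 0 \\ 0 & D \end{pmatrix}$, $P^d = \begin{pmatrix} A^d & 0 \\ 0 & D^d \end{pmatrix}$ and $Q = \begin{pmatrix} 0 & B \\ C & 0 \end{pmatrix}$.
   Context: $M_2(\mathcal{A})$ is the Banach algebra of $2\times 2$ matrices over $\mathcal{A}$. An element $x$ of a Banach algebra has a generalized Drazin (g-Drazin) inverse $x^d$ if $x^d$ commutes with $x$, $x^d = x^dxx^d$ and $x - x^2x^d$ is quasinilpotent (i.e. $\lim\|y^n\|^{1/n}=0$ for $y=x-x^2x^d$); $\mathcal{A}^d$ (resp. $M_2(\mathcal{A})^d$) denotes the set of g-Drazin invertible elements. The spectral idempotent is $x^\pi = 1 - xx^d$. *)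

(* Defs.v *)
From Stdlib Require Import Reals.
Open Scope R_scope.

Record Cpx := mkC { Re : R ; Im : R }.
Definition C0 : Cpx := mkC 0 0.
Definition C1 : Cpx := mkC 1 0.
Definition Cadd (a b : Cpx) : Cpx := mkC (Re a + Re b) (Im a + Im b).
Definition Cmul (a b : Cpx) : Cpx :=
  mkC (Re a * Re b - Im a * Im b) (Re a * Im b + Im a * Re b).
Definition Cmod (a : Cpx) : R := sqrt (Re a ^ 2 + Im a ^ 2).

Record BanachAlg := {
  carrier :> Type;
  zero : carrier;
  one : carrier;
  add : carrier -> carrier -> carrier;
  opp : carrier -> carrier;
  mul : carrier -> carrier -> carrier;
  scal : Cpx -> carrier -> carrier;
  norm : carrier -> R;
  add_assoc : forall x y z, add x (add y z) = add (add x y) z;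
  add_comm : forall x y, add x y = add y x;
  add_zero_l : forall x, add zero x = x;
  add_opp_l : forall x, add (opp x) x = zero;
  mul_assoc : forall x y z, mul x (mul y z) = mul (mul x y) z;
  mul_one_l : forall x, mul one x = x;
  mul_one_r : forall x, mul x one = x;
  mul_add_l : forall x y z, mul (add x y) z = add (mul x z) (mul y z);
  mul_add_r : forall x y z, mul x (add y z) = add (mul x y) (mul x z);
  scal_add_c : forall a b x, scal (Cadd a b) x = add (scal a x) (scal b x);
  scal_add_x : forall a x y, scal a (add x y) = add (scal a x) (scal a y);
  scal_mul_c : forall a b x, scal (Cmul a b) x = scal a (scal b x);
  scal_one : forall x, scal C1 x = x;
  scal_mul_l : forall a x y, mul (scal a x) y = scal a (mul x y);
  scal_mul_r : forall a x y, mul x (scal a y) = scal a (mul x y);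
  norm_nonneg : forall x, 0 <= norm x;
  norm_eq0 : forall x, norm x = 0 -> x = zero;
  norm_triangle : forall x y, norm (add x y) <= norm x + norm y;
  norm_scal : forall a x, norm (scal a x) = Cmod a * norm x;
  norm_submult : forall x y, norm (mul x y) <= norm x * norm y;
  norm_one : norm one = 1;
  complete : forall u : nat -> carrier,
    (forall eps, eps > 0 -> exists N, forall n m, (n >= N)%nat -> (m >= N)%nat ->
        norm (add (u n) (opp (u m))) < eps) ->
    exists l, Un_cv (fun n => norm (add (u n) (opp l))) 0
}.

Arguments zero {_}. Arguments one {_}. Arguments add {_}. Arguments opp {_}.
Arguments mul {_}. Arguments scal {_}. Arguments norm {_}.

Fixpoint gpow {T : Type} (mulT : T -> T -> T) (oneT : T) (x : T) (n : nat) : T :=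
  match n with O => oneT | S k => mulT x (gpow mulT oneT x k) end.

Definition nroot (t : R) (n : nat) : R :=
  if Rle_dec t 0 then 0 else Rpower t (/ INR n).

Definition quasinil {T : Type} (mulT : T -> T -> T) (oneT : T) (normT : T -> R)
  (y : T) : Prop :=
  Un_cv (fun n => nroot (normT (gpow mulT oneT y n)) n) 0.

Definition is_gdrazin {T : Type} (addT : T -> T -> T) (oppT : T -> T)
  (mulT : T -> T -> T) (oneT : T) (normT : T -> R) (x xd : T) : Prop :=
  mulT xd x = mulT x xd /\
  mulT (mulT xd x) xd = xd /\
  quasinil mulT oneT normT (addT x (oppT (mulT (mulT x x) xd))).

Section M2.
Variable X : BanachAlg.

Record M2 := mkM2 { m11 : X ; m12 : X ; m21 : X ; m22 : X }.

Definition m2add (M N : M2) : M2 :=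
  mkM2 (add (m11 M) (m11 N)) (add (m12 M) (m12 N))
       (add (m21 M) (m21 N)) (add (m22 M) (m22 N)).
Definition m2opp (M : M2) : M2 :=
  mkM2 (opp (m11 M)) (opp (m12 M)) (opp (m21 M)) (opp (m22 M)).
Definition m2mul (M N : M2) : M2 :=
  mkM2 (add (mul (m11 M) (m11 N)) (mul (m12 M) (m21 N)))
       (add (mul (m11 M) (m12 N)) (mul (m12 M) (m22 N)))
       (add (mul (m21 M) (m11 N)) (mul (m22 M) (m21 N)))
       (add (mul (m21 M) (m12 N)) (mul (m22 M) (m22 N))).
Definition m2zero : M2 := mkM2 zero zero zero zero.
Definition m2one : M2 := mkM2 one zero zero one.
(* Banach algebra norm on M_2(A): maximal row sum of entry norms
   (submultiplicative; equivalent to every other standard choice) *)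
Definition m2norm (M : M2) : R :=
  Rmax (norm (m11 M) + norm (m12 M)) (norm (m21 M) + norm (m22 M)).

Definition m2pow (M : M2) (n : nat) : M2 := gpow m2mul m2one M n.

Definition m2_gdrazin (M Md : M2) : Prop :=
  is_gdrazin m2add m2opp m2mul m2one m2norm M Md.

Fixpoint m2partial (u : nat -> M2) (n : nat) : M2 :=
  match n with O => u O | S k => m2add (m2partial u k) (u (S k)) end.

Definition m2_series (u : nat -> M2) (S : M2) : Prop :=
  Un_cv (fun n => m2norm (m2add (m2partial u n) (m2opp S))) 0.
End M2.

Arguments mkM2 {X}. Arguments m2add {X}. Arguments m2opp {X}. Arguments m2mul {X}.
Arguments m2one {X}. Arguments m2norm {X}. Arguments m2pow {X}.
Arguments m2_gdrazin {X}. Arguments m2_series {X}.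

Definition gdrazin_in (X : BanachAlg) (x xd : X) : Prop :=
  is_gdrazin add opp mul one norm x xd.

Definition spec_idem (X : BanachAlg) (x xd : X) : X := add one (opp (mul x xd)).

(* Main.v *)
Require Import Defs.
From Stdlib Require Import Reals Lra Lia.
Open Scope R_scope.

Section Alg.
Context {X : BanachAlg}.
Implicit Types x y z : X.

Lemma aA x y z : add x (add y z) = add (add x y) z. Proof. apply add_assoc. Qed.
Lemma aC x y : add x y = add y x. Proof. apply add_comm. Qed.
Lemma a0l x : add zero x = x. Proof. apply add_zero_l. Qed.
Lemma a0r x : add x zero = x. Proof. rewrite aC; apply a0l. Qed.
Lemma aNl x : add (opp x) x = zero. Proof. apply add_opp_l. Qed.
Lemma aNr x : add x (opp x) = zero. Proof. rewrite aC; apply aNl. Qed.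
Lemma mA x y z : mul x (mul y z) = mul (mul x y) z. Proof. apply mul_assoc. Qed.
Lemma m1l x : mul one x = x. Proof. apply mul_one_l. Qed.
Lemma m1r x : mul x one = x. Proof. apply mul_one_r. Qed.
Lemma mDl x y z : mul (add x y) z = add (mul x z) (mul y z). Proof. apply mul_add_l. Qed.
Lemma mDr x y z : mul x (add y z) = add (mul x y) (mul x z). Proof. apply mul_add_r. Qed.
Lemma sml a x y : mul (scal a x) y = scal a (mul x y). Proof. apply scal_mul_l. Qed.
Lemma smr a x y : mul x (scal a y) = scal a (mul x y). Proof. apply scal_mul_r. Qed.
Lemma sD a x y : scal a (add x y) = add (scal a x) (scal a y). Proof. apply scal_add_x. Qed.

Lemma add_cancel x y z : add x y = add x z -> y = z.
Proof.
  intros H. rewrite <- (a0l y), <- (a0l z), <- (aNl x), <- !aA, H. reflexivity.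
Qed.
Lemma idem0 x : add x x = x -> x = zero.
Proof. intros H. apply (add_cancel x). rewrite a0r. exact H. Qed.
Lemma m0l x : mul zero x = zero.
Proof. apply idem0. rewrite <- mDl, a0l. reflexivity. Qed.
Lemma m0r x : mul x zero = zero.
Proof. apply idem0. rewrite <- mDr, a0l. reflexivity. Qed.
Lemma s0 a : scal a (zero : X) = zero.
Proof. apply idem0. rewrite <- sD, a0l. reflexivity. Qed.
Lemma opp_unique x y : add x y = zero -> y = opp x.
Proof. intros H. rewrite <- (a0l y), <- (aNl x), <- aA, H, a0r. reflexivity. Qed.
Lemma mNr x y : mul x (opp y) = opp (mul x y).
Proof. apply opp_unique. rewrite <- mDr, aNr, m0r. reflexivity. Qed.
Lemma mNl x y : mul (opp x) y = opp (mul x y).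
Proof. apply opp_unique. rewrite <- mDl, aNr, m0l. reflexivity. Qed.
Lemma opp0 : opp (zero : X) = zero.
Proof. symmetry. apply opp_unique. apply a0l. Qed.

Lemma Cmod0 : Cmod C0 = 0.
Proof. unfold Cmod, C0; cbv [Re Im]. replace (0^2+0^2) with 0 by ring. apply sqrt_0. Qed.
Lemma norm0 : norm (zero : X) = 0.
Proof. rewrite <- (s0 C0), norm_scal, Cmod0. ring. Qed.
Lemma nn x : 0 <= norm x. Proof. apply norm_nonneg. Qed.
Lemma ntri x y : norm (add x y) <= norm x + norm y. Proof. apply norm_triangle. Qed.
Lemma nsub x y : norm (mul x y) <= norm x * norm y. Proof. apply norm_submult. Qed.

Lemma Cmod_pos a : a <> C0 -> 0 < Cmod a.
Proof.
  intros H. unfold Cmod. apply sqrt_lt_R0.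
  destruct a as [r i]; simpl.
  destruct (Req_dec r 0); destruct (Req_dec i 0).
  - subst; exfalso; apply H; reflexivity.
  - assert (0 < i^2) by (simpl; rewrite Rmult_1_r; apply Rsqr_pos_lt; auto). assert (0 <= r^2) by (simpl; rewrite Rmult_1_r; apply Rle_0_sqr). lra.
  - assert (0 < r^2) by (simpl; rewrite Rmult_1_r; apply Rsqr_pos_lt; auto). assert (0 <= i^2) by (simpl; rewrite Rmult_1_r; apply Rle_0_sqr). lra.
  - assert (0 < r^2) by (simpl; rewrite Rmult_1_r; apply Rsqr_pos_lt; auto). assert (0 <= i^2) by (simpl; rewrite Rmult_1_r; apply Rle_0_sqr). lra.
Qed.
Lemma Cmod_nn a : 0 <= Cmod a. Proof. apply sqrt_pos. Qed.

Definition xpow x n := gpow (@mul X) one x n.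
Lemma xpow_S_r x n : xpow x (S n) = mul (xpow x n) x.
Proof.
  induction n; unfold xpow in *; simpl in *.
  - rewrite m1r, m1l; reflexivity.
  - rewrite IHn at 1. apply mA.
Qed.
Lemma norm_pow x n : norm (xpow x n) <= norm x ^ n.
Proof.
  induction n; simpl.
  - rewrite norm_one. lra.
  - eapply Rle_trans. apply nsub. apply Rmult_le_compat_l. apply nn. exact IHn.
Qed.

Fixpoint siter (c : Cpx) (n : nat) (x : X) : X :=
  match n with O => x | S k => scal c (siter c k x) end.
Lemma siter_mul_l c n x y : mul (siter c n x) y = siter c n (mul x y).
Proof. induction n; simpl; auto. rewrite sml, IHn. reflexivity. Qed.
Lemma siter_mul_r c n x y : mul x (siter c n y) = siter c n (mul x y).
Proof. induction n; simpl; auto. rewrite smr, IHn. reflexivity. Qed.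
Lemma norm_siter c n x : norm (siter c n x) = Cmod c ^ n * norm x.
Proof. induction n; simpl. ring. rewrite norm_scal, IHn. ring. Qed.

End Alg.

Definition QN (a : nat -> R) := forall e, 0 < e -> exists N, forall n, (n >= N)%nat -> a n <= e ^ n.

Lemma Rpower_root_pow t n : 0 < t -> (n >= 1)%nat -> Rpower t (/ INR n) ^ n = t.
Proof.
  intros Ht Hn. rewrite <- Rpower_pow by (unfold Rpower; apply exp_pos).
  rewrite Rpower_mult. rewrite Rinv_l. apply Rpower_1; auto.
  apply not_0_INR. lia.
Qed.

Lemma pow_root t n : 0 < t -> (n >= 1)%nat -> Rpower (t ^ n) (/ INR n) = t.
Proof.
  intros Ht Hn. rewrite <- Rpower_pow by auto. rewrite Rpower_mult, Rinv_r.
  apply Rpower_1; auto. apply not_0_INR. lia.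
Qed.

Lemma quasinil_QN a : (forall n, 0 <= a n) -> Un_cv (fun n => nroot (a n) n) 0 -> QN a.
Proof.
  intros Hp H e He. destruct (H e He) as [N HN]. exists (max N 1). intros n Hn.
  specialize (HN n ltac:(lia)). unfold R_dist, nroot in HN.
  destruct (Rle_dec (a n) 0) as [H0|H0].
  - assert (0 < e ^ n) by (apply pow_lt; auto). lra.
  - assert (Hpos : 0 < a n) by lra.
    rewrite <- (Rpower_root_pow (a n) n) by (auto; lia).
    apply pow_incr. split. unfold Rpower; left; apply exp_pos.
    rewrite Rminus_0_r in HN. apply Rabs_def2 in HN. lra.
Qed.

Lemma QN_quasinil a : (forall n, 0 <= a n) -> QN a -> Un_cv (fun n => nroot (a n) n) 0.
Proof.
  intros Hp H e He. destruct (H (e/2) ltac:(lra)) as [N HN]. exists (max N 1). intros n Hn.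
  specialize (HN n ltac:(lia)). unfold R_dist, nroot.
  destruct (Rle_dec (a n) 0) as [H0|H0].
  - rewrite Rminus_0_r, Rabs_R0. auto.
  - rewrite Rminus_0_r. assert (Hpos : 0 < a n) by lra.
    assert (Hr : 0 < Rpower (a n) (/ INR n)) by (unfold Rpower; apply exp_pos).
    rewrite Rabs_pos_eq by lra.
    assert (Rpower (a n) (/ INR n) <= Rpower ((e/2)^n) (/ INR n)).
    { apply Rle_Rpower_l. left. apply Rinv_0_lt_compat. apply lt_0_INR. lia. lra. }
    rewrite pow_root in H1 by (lra || lia). lra.
Qed.

Section Side.
Context {X : BanachAlg}.
Variables (lam : Cpx) (a b d ad dd : X).
Hypothesis Hlam : lam <> C0.
Hypothesis Ha : gdrazin_in X a ad.
Hypothesis Hd : gdrazin_in X d dd.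
Hypothesis Hb : mul b d = scal lam (mul (mul a b) (spec_idem X d dd)).

Lemma side1 : mul (mul b d) dd = zero.
Proof.
  destruct Hd as [Hc [H2 _]].
  rewrite Hb, sml, <- mA. unfold spec_idem. rewrite mDl, m1l, mNl.
  rewrite <- Hc, H2, aNr, m0r, s0. reflexivity.
Qed.

Lemma side2 : mul b dd = zero.
Proof.
  destruct Hd as [Hc [H2 _]].
  rewrite <- H2, Hc, !mA, side1, !m0l. reflexivity.
Qed.

Lemma side3 : mul b (add d (opp (mul (mul d d) dd))) = mul b d.
Proof.
  destruct Hd as [Hc [H2 _]].
  rewrite mDr, mNr.
  replace (mul b (mul (mul d d) dd)) with (zero : X). rewrite opp0, a0r. reflexivity.
  rewrite <- mA, <- Hc, !mA, side1, m0l. reflexivity.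
Qed.

Lemma side4 : mul b d = scal lam (mul a b).
Proof.
  rewrite Hb at 1. unfold spec_idem. rewrite mDr, m1r, mNr.
  replace (mul (mul a b) (mul d dd)) with (zero : X). rewrite opp0, a0r. reflexivity.
  rewrite <- !mA, (mA b), side1, m0r. reflexivity.
Qed.

Let d1 := add d (opp (mul (mul d d) dd)).

Lemma side_pow n : mul b (xpow d1 n) = siter lam n (mul (xpow a n) b).
Proof.
  induction n; unfold xpow in *; simpl.
  - rewrite m1r, m1l. reflexivity.
  - rewrite mA. replace (mul b d1) with (scal lam (mul a b)) by (unfold d1; rewrite side3, side4; reflexivity).
    rewrite sml, <- mA, IHn, siter_mul_r, mA. reflexivity.
Qed.

Lemma ad_pow n : mul (xpow ad (S n)) (xpow a n) = ad.
Proof.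
  destruct Ha as [Hc [H2 _]].
  assert (E : mul ad (mul ad a) = ad) by (rewrite Hc, mA, H2; reflexivity).
  induction n.
  - unfold xpow; simpl. rewrite !m1r. reflexivity.
  - rewrite (xpow_S_r ad (S n)).
    transitivity (mul (mul (xpow ad (S n)) (mul ad a)) (xpow a n)).
    { change (xpow a (S n)) with (mul a (xpow a n)). rewrite !mA. reflexivity. }
    rewrite (xpow_S_r ad n), <- (mA (xpow ad n)), E, <- xpow_S_r. exact IHn.
Qed.

Lemma side5 : mul ad b = zero.
Proof.
  destruct Hd as [_ [_ Hq]].
  apply quasinil_QN in Hq; [| intros; apply nn].
  set (r := Cmod lam). assert (Hr : 0 < r) by (apply Cmod_pos; auto).
  set (K := norm ad). set (bb := norm b). set (z := norm (mul ad b)).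
  assert (HK : 0 <= K) by apply nn. assert (Hbb : 0 <= bb) by apply nn.
  assert (Hz : 0 <= z) by apply nn.
  assert (Key : forall n, r ^ n * z <= K ^ (S n) * bb * norm (xpow d1 n)).
  { intros n. unfold r, z. rewrite <- norm_siter.
    rewrite <- (ad_pow n) at 1. rewrite <- mA, <- siter_mul_r, <- side_pow.
    eapply Rle_trans. apply nsub. rewrite Rmult_assoc. apply Rmult_le_compat.
    apply nn. apply nn. apply norm_pow.
    apply nsub. }
  set (e := r / (2 * (K + 1))).
  assert (He : 0 < e) by (unfold e; apply Rdiv_lt_0_compat; lra).
  destruct (Hq e He) as [N HN].
  assert (B2 : forall n, (n >= N)%nat -> z <= K * bb * (/2) ^ n).
  { intros n Hn. specialize (Key n). specialize (HN n Hn). fold d1 in HN.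
    assert (Hrn : 0 < r ^ n) by (apply pow_lt; auto).
    apply Rmult_le_reg_l with (r ^ n); auto.
    eapply Rle_trans. exact Key.
    replace (K ^ S n * bb * norm (xpow d1 n)) with (K * bb * (K ^ n * norm (xpow d1 n))) by (simpl; ring).
    replace (r ^ n * (K * bb * (/ 2) ^ n)) with (K * bb * (r / 2) ^ n)
      by (unfold Rdiv; rewrite Rpow_mult_distr; ring).
    apply Rmult_le_compat_l. apply Rmult_le_pos; auto.
    apply Rle_trans with (K ^ n * e ^ n). apply Rmult_le_compat_l. apply pow_le; auto. exact HN.
    rewrite <- Rpow_mult_distr. apply pow_incr. split. apply Rmult_le_pos; lra.
    unfold e. apply Rle_trans with (r / 2 * (K / (K+1))).
    right. field. lra.
    rewrite <- (Rmult_1_r (r/2)) at 2. apply Rmult_le_compat_l. lra.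
    apply Rmult_le_reg_r with (K+1). lra. unfold Rdiv; rewrite Rmult_assoc, Rinv_l; lra. }
  destruct (Req_dec z 0) as [Z|Z].
  - apply norm_eq0. exact Z.
  - exfalso. assert (Hzp : 0 < z) by lra.
    assert (Hc : 0 < z / (K * bb + 1)) by (apply Rdiv_lt_0_compat; nra).
    destruct (pow_lt_1_zero (/2) ltac:(rewrite Rabs_pos_eq; lra) _ Hc) as [N' HN'].
    specialize (B2 (max N N') ltac:(lia)). specialize (HN' (max N N') ltac:(lia)).
    rewrite Rabs_pos_eq in HN' by (apply pow_le; lra).
    assert (K * bb * (/ 2) ^ max N N' <= K * bb * (z / (K * bb + 1))).
    { apply Rmult_le_compat_l. nra. lra. }
    assert (K * bb * (z / (K * bb + 1)) < z).
    { apply Rmult_lt_reg_r with (K * bb + 1). nra. replace (K * bb * (z / (K * bb + 1)) * (K * bb + 1)) with (K * bb * z) by (field; nra). nra. }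
    lra.
Qed.

Lemma side6 : mul b d1 = scal lam (mul (add a (opp (mul (mul a a) ad))) b).
Proof.
  unfold d1. rewrite side3, side4, mDl, mNl, <- (mA (mul a a)), side5, m0r, opp0, a0r.
  reflexivity.
Qed.

End Side.

Section M2alg.
Context {X : BanachAlg}.
Notation M := (M2 X).
Implicit Types x y z : M.

Lemma add4 (a b c d : X) : add (add a b) (add c d) = add (add a c) (add b d).
Proof. rewrite <- !aA. f_equal. rewrite !aA. f_equal. apply aC. Qed.

Definition m2scal (c : Cpx) x : M := mkM2 (scal c (m11 X x)) (scal c (m12 X x)) (scal c (m21 X x)) (scal c (m22 X x)).

Ltac m2d := repeat match goal with x : M |- _ => destruct x end; unfold m2add, m2mul, m2scal, m2zero, m2one, m2opp; simpl; f_equal.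

Lemma m2A x y z : m2mul x (m2mul y z) = m2mul (m2mul x y) z.
Proof. m2d; rewrite ?mDl, ?mDr, ?mA; apply add4. Qed.
Lemma m2Dl x y z : m2mul (m2add x y) z = m2add (m2mul x z) (m2mul y z).
Proof. m2d; rewrite ?mDl; apply add4. Qed.
Lemma m2Dr x y z : m2mul x (m2add y z) = m2add (m2mul x y) (m2mul x z).
Proof. m2d; rewrite ?mDr; apply add4. Qed.
Lemma m2aA x y z : m2add x (m2add y z) = m2add (m2add x y) z.
Proof. m2d; apply aA. Qed.
Lemma m2aC x y : m2add x y = m2add y x.
Proof. m2d; apply aC. Qed.
Lemma m2a0l x : m2add (m2zero X) x = x.
Proof. m2d; apply a0l. Qed.
Lemma m2a0r x : m2add x (m2zero X) = x.
Proof. m2d; apply a0r. Qed.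
Lemma m2m0l x : m2mul (m2zero X) x = m2zero X.
Proof. m2d; rewrite !m0l, a0l; reflexivity. Qed.
Lemma m2m0r x : m2mul x (m2zero X) = m2zero X.
Proof. m2d; rewrite !m0r, a0l; reflexivity. Qed.
Lemma m2m1l x : m2mul m2one x = x.
Proof. m2d; rewrite ?m1l, ?m0l, ?a0l, ?a0r; reflexivity. Qed.
Lemma m2m1r x : m2mul x m2one = x.
Proof. m2d; rewrite ?m1r, ?m0r, ?a0l, ?a0r; reflexivity. Qed.
Lemma m2sml c x y : m2mul (m2scal c x) y = m2scal c (m2mul x y).
Proof. m2d; rewrite ?sml, ?sD; reflexivity. Qed.
Lemma m2smr c x y : m2mul x (m2scal c y) = m2scal c (m2mul x y).
Proof. m2d; rewrite ?smr, ?sD; reflexivity. Qed.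
Lemma m2sD c x y : m2scal c (m2add x y) = m2add (m2scal c x) (m2scal c y).
Proof. m2d; apply sD. Qed.
Lemma m2s0 c : m2scal c (m2zero X) = m2zero X.
Proof. m2d; apply s0. Qed.

Lemma m2norm_nn x : 0 <= m2norm x.
Proof. unfold m2norm. eapply Rle_trans; [|apply Rmax_l]. pose proof (nn (m11 X x)); pose proof (nn (m12 X x)); lra. Qed.
Lemma m2norm0 : m2norm (m2zero X) = 0.
Proof. unfold m2norm, m2zero; simpl. rewrite norm0, Rplus_0_r, Rmax_left; lra. Qed.
Lemma m2norm_tri x y : m2norm (m2add x y) <= m2norm x + m2norm y.
Proof.
  destruct x as [a b c d], y as [a' b' c' d']. unfold m2norm, m2add; simpl.
  pose proof (ntri a a'); pose proof (ntri b b'); pose proof (ntri c c'); pose proof (ntri d d').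
  pose proof (Rmax_l (norm a + norm b) (norm c + norm d)).
  pose proof (Rmax_r (norm a + norm b) (norm c + norm d)).
  pose proof (Rmax_l (norm a' + norm b') (norm c' + norm d')).
  pose proof (Rmax_r (norm a' + norm b') (norm c' + norm d')).
  apply Rmax_lub; lra.
Qed.
Lemma m2norm_sub x y : m2norm (m2mul x y) <= m2norm x * m2norm y.
Proof.
  destruct x as [a b c d], y as [a' b' c' d']. unfold m2norm, m2mul; simpl.
  set (m := Rmax (norm a' + norm b') (norm c' + norm d')).
  pose proof (Rmax_l (norm a' + norm b') (norm c' + norm d')).
  pose proof (Rmax_r (norm a' + norm b') (norm c' + norm d')).
  fold m in H, H0.
  pose proof (Rmax_l (norm a + norm b) (norm c + norm d)).
  pose proof (Rmax_r (norm a + norm b) (norm c + norm d)).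
  set (m0 := Rmax (norm a + norm b) (norm c + norm d)) in *.
  assert (Hm : 0 <= m) by (pose proof (nn a'); pose proof (nn b'); lra).
  pose proof (nn a); pose proof (nn b); pose proof (nn c); pose proof (nn d).
  pose proof (nn a'); pose proof (nn b'); pose proof (nn c'); pose proof (nn d').
  pose proof (ntri (mul a a') (mul b c')); pose proof (ntri (mul a b') (mul b d')).
  pose proof (ntri (mul c a') (mul d c')); pose proof (ntri (mul c b') (mul d d')).
  pose proof (nsub a a'); pose proof (nsub b c'); pose proof (nsub a b'); pose proof (nsub b d').
  pose proof (nsub c a'); pose proof (nsub d c'); pose proof (nsub c b'); pose proof (nsub d d').
  apply Rmax_lub.
  - apply Rle_trans with (norm a * m + norm b * m); [nra|]. nra.
  - apply Rle_trans with (norm c * m + norm d * m); [nra|]. nra.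
Qed.
Lemma m2norm_scal c x : m2norm (m2scal c x) <= Cmod c * m2norm x.
Proof.
  destruct x as [a b cc d]. unfold m2norm, m2scal; simpl. rewrite !norm_scal.
  rewrite <- RmaxRmult by apply Cmod_nn. right. f_equal; ring.
Qed.
Lemma m2norm_one : m2norm (@m2one X) = 1.
Proof. unfold m2norm, m2one; simpl. rewrite norm0, norm_one, Rplus_0_r, Rplus_0_l, Rmax_left; lra. Qed.

Lemma m2pow_S_r x n : m2pow x (S n) = m2mul (m2pow x n) x.
Proof.
  induction n; unfold m2pow in *; simpl in *.
  - rewrite m2m1r, m2m1l; reflexivity.
  - rewrite IHn at 1. apply m2A.
Qed.
Lemma m2norm_pow x n : m2norm (m2pow x n) <= m2norm x ^ n.
Proof.
  induction n.
  - change (m2pow x 0) with (@m2one X). rewrite m2norm_one. simpl; lra.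
  - change (m2pow x (S n)) with (m2mul x (m2pow x n)). simpl (_ ^ S _). eapply Rle_trans. apply m2norm_sub. apply Rmult_le_compat_l. apply m2norm_nn. exact IHn.
Qed.

Fixpoint m2siter (c : Cpx) (n : nat) x : M :=
  match n with O => x | S k => m2scal c (m2siter c k x) end.
Lemma m2siter_mul_l c n x y : m2mul (m2siter c n x) y = m2siter c n (m2mul x y).
Proof. induction n; simpl; auto. rewrite m2sml, IHn. reflexivity. Qed.
Lemma m2siter_mul_r c n x y : m2mul x (m2siter c n y) = m2siter c n (m2mul x y).
Proof. induction n; simpl; auto. rewrite m2smr, IHn. reflexivity. Qed.
Lemma m2siter_add c n x y : m2siter c n (m2add x y) = m2add (m2siter c n x) (m2siter c n y).
Proof. induction n; simpl; auto. rewrite IHn, m2sD. reflexivity. Qed.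
Lemma m2siter0 c n : m2siter c n (m2zero X) = m2zero X.
Proof. induction n; simpl; auto. rewrite IHn, m2s0. reflexivity. Qed.
Lemma m2norm_siter c n x : m2norm (m2siter c n x) <= Cmod c ^ n * m2norm x.
Proof.
  induction n; simpl. lra.
  eapply Rle_trans. apply m2norm_scal. rewrite Rmult_assoc. apply Rmult_le_compat_l. apply Cmod_nn. exact IHn.
Qed.

End M2alg.

Lemma sq_bound m : (INR m + 2) ^ 2 <= 8 * 2 ^ m.
Proof.
  induction m.
  - simpl. lra.
  - rewrite S_INR. destruct m.
    + simpl. lra.
    + assert (1 <= INR (S m)) by (rewrite S_INR; pose proof (pos_INR m); lra).
      set (x := INR (S m)) in *. set (y := 2 ^ S m) in *. simpl pow in *.
      assert ((x + 1 + 2) * ((x + 1 + 2) * 1) <= 2 * ((x + 2) * ((x + 2) * 1))) by nra.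
      assert (2 * ((x + 2) * ((x + 2) * 1)) <= 2 * (8 * y)) by lra.
      replace (2 * (8 * y)) with (8 * (2 * y)) in H1 by ring.
      idtac.
      unfold y in *. lra.
Qed.

Lemma add5 {X : BanachAlg} (a b c d e : X) : add (add a (add b c)) (add d e) = add a (add (add b d) (add c e)).
Proof.
  rewrite <- !aA. f_equal. rewrite !aA. f_equal. rewrite <- !aA. f_equal. apply aC.
Qed.

Section QNsum.
Context {X : BanachAlg}.
Variables (P Q : M2 X) (c : Cpx).
Hypothesis H1 : QN (fun n => m2norm (m2pow P n)).
Hypothesis H2 : m2mul Q P = m2mul P (m2scal c Q).
Hypothesis H3 : m2mul Q (m2mul Q Q) = m2zero X.

Lemma m2add5 (a b cc d e : M2 X) : m2add (m2add a (m2add b cc)) (m2add d e) = m2add a (m2add (m2add b d) (m2add cc e)).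
Proof. destruct a, b, cc, d, e; unfold m2add; simpl; f_equal; apply add5. Qed.

Lemma QPk k : m2mul Q (m2pow P k) = m2mul (m2pow P k) (m2siter c k Q).
Proof.
  induction k.
  - change (m2pow P 0) with (@m2one X). simpl. rewrite m2m1l, m2m1r. reflexivity.
  - change (m2pow P (S k)) with (m2mul P (m2pow P k)). simpl m2siter.
    rewrite m2A, H2, <- m2A, m2sml, IHk, <- m2smr, m2A. reflexivity.
Qed.

Let L := Rmax 1 (Cmod c).
Let q := m2norm Q.
Let W := L * L.

Lemma L1 : 1 <= L. Proof. apply Rmax_l. Qed.
Lemma Lc k : Cmod c ^ k <= L ^ k.
Proof. apply pow_incr. split. apply Cmod_nn. apply Rmax_r. Qed.

Lemma inv n : exists U V,
  m2pow (m2add P Q) (n + 2) = m2add (m2pow P (n+2)) (m2add (m2mul (m2pow P (n+1)) U) (m2mul (m2pow P n) V))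
  /\ m2mul Q V = m2zero X /\ m2mul Q (m2mul Q U) = m2zero X
  /\ m2norm U <= (INR n + 2) * L ^ (n+2) * q
  /\ m2norm V <= (INR n + 2) ^ 2 * W ^ (n+2) * q ^ 2.
Proof.
  pose proof L1 as HL. assert (Hq : 0 <= q) by apply m2norm_nn.
  assert (HW : 1 <= W) by (unfold W; nra).
  induction n.
  - exists (m2add Q (m2scal c Q)), (m2mul Q Q). simpl plus.
    split; [|split; [|split; [|split]]].
    + change (m2pow (m2add P Q) 2) with (m2mul (m2add P Q) (m2mul (m2add P Q) m2one)).
      change (m2pow P 2) with (m2mul P (m2mul P m2one)).
      change (m2pow P 1) with (m2mul P m2one).
      change (m2pow P 0) with (@m2one X).
      rewrite !m2m1r, m2m1l, !m2Dl, !m2Dr, H2, !m2aA. reflexivity.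
    + apply H3.
    + rewrite !m2Dr, m2smr, m2smr, H3, m2s0, m2a0l. reflexivity.
    + eapply Rle_trans. apply m2norm_tri. eapply Rle_trans.
      apply Rplus_le_compat_l. apply m2norm_scal. fold q. simpl INR.
      assert (Cmod c <= L) by apply Rmax_r. simpl pow.
      assert (Cmod c * q <= L*q) by nra. assert (0 <= (L-1)*(L*q)) by (apply Rmult_le_pos; nra). assert (0 <= (L*L-1)*q) by (apply Rmult_le_pos; nra). lra.
    + eapply Rle_trans. apply m2norm_sub. fold q. simpl INR. simpl pow.
      unfold W. assert (1 <= L*L) by nra. assert (1 <= (L*L)*(L*L)) by nra. nra.
  - destruct IHn as [U [V [E [HV [HU [BU BV]]]]]].
    exists (m2add U (m2siter c (n+2) Q)), (m2add V (m2siter c (n+1) (m2mul Q U))).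
    split; [|split; [|split; [|split]]].
    + replace (S n + 2)%nat with (S (n+2)) by lia.
      replace (S n + 1)%nat with (S (n+1)) by lia.
      change (m2pow (m2add P Q) (S (n + 2))) with (m2mul (m2add P Q) (m2pow (m2add P Q) (n + 2))).
      rewrite E, m2Dl, !m2Dr.
      rewrite (m2A Q (m2pow P (n+1)) U), (m2A Q (m2pow P n) V), !QPk.
      rewrite <- (m2A (m2pow P n) (m2siter c n Q) V), m2siter_mul_l, HV, m2siter0, m2m0r, m2a0r.
      rewrite <- (m2A (m2pow P (n+1)) (m2siter c (n+1) Q) U), m2siter_mul_l.
      rewrite (m2A P (m2pow P (n+1)) U), (m2A P (m2pow P n) V).
      change (m2mul P (m2pow P (n+2))) with (m2pow P (S (n+2))).
      change (m2mul P (m2pow P (n+1))) with (m2pow P (S (n+1))).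
      change (m2mul P (m2pow P n)) with (m2pow P (S n)).
      replace (S (n+1)) with (n+2)%nat by lia.
      replace (S n) with (n+1)%nat by lia.
      apply m2add5.
    + rewrite m2Dr, HV, m2siter_mul_r, HU, m2siter0, m2a0l. reflexivity.
    + rewrite !m2Dr, !m2siter_mul_r, HU, H3, m2siter0, m2a0l. reflexivity.
    + eapply Rle_trans. apply m2norm_tri. eapply Rle_trans.
      apply Rplus_le_compat_l. apply m2norm_siter. fold q.
      pose proof (Lc (n+2)). rewrite S_INR.
      assert (L ^ (n+2) <= L ^ (S n + 2)) by (apply Rle_pow; auto; lia).
      assert (1 <= L ^ (n+2)) by (rewrite <- (pow1 (n+2)); apply pow_incr; lra).
      pose proof (pos_INR n).
      assert ((INR n + 2) * L^(n+2) * q <= (INR n + 2) * L^(S n + 2) * q) by (apply Rmult_le_compat_r; auto; apply Rmult_le_compat_l; lra).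
      assert (Cmod c ^ (n + 2) * q <= L^(S n + 2) * q) by (apply Rmult_le_compat_r; lra).
      lra.
    + eapply Rle_trans. apply m2norm_tri. eapply Rle_trans.
      apply Rplus_le_compat_l. apply m2norm_siter.
      eapply Rle_trans. apply Rplus_le_compat_l. apply Rmult_le_compat_l. apply pow_le, Cmod_nn.
      apply m2norm_sub. fold q.
      pose proof (Lc (n+1)). rewrite S_INR.
      assert (HLn : L ^ (n+1) <= L ^ (n+2)) by (apply Rle_pow; auto; lia).
      assert (HWe : W ^ (n+2) = L^(n+2) * L^(n+2)) by (unfold W; apply Rpow_mult_distr).
      assert (W ^ (n+2) <= W ^ (S n + 2)) by (apply Rle_pow; auto; lia).
      assert (1 <= L ^ (n+2)) by (rewrite <- (pow1 (n+2)); apply pow_incr; lra).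
      assert (0 <= m2norm U) by apply m2norm_nn.
      assert (0 <= Cmod c ^ (n+1)) by (apply pow_le, Cmod_nn).
      pose proof (pos_INR n).
      assert (T : Cmod c ^ (n + 1) * (q * m2norm U) <= (INR n + 2) * W ^ (n+2) * q ^ 2).
      { apply Rle_trans with (L ^ (n+2) * (q * ((INR n + 2) * L ^ (n + 2) * q))).
        apply Rmult_le_compat. auto. apply Rmult_le_pos; auto. lra. apply Rmult_le_compat_l; auto.
        rewrite HWe. right. ring. }
      assert (0 <= W ^ (n+2)) by (apply pow_le; lra).
      assert (0 <= q^2) by apply pow2_ge_0.
      assert (((INR n + 2)^2 + (INR n + 2)) * (W^(n+2) * q^2) <= (INR n + 1 + 2) ^ 2 * (W ^ (S n + 2) * q ^ 2)).
      { apply Rmult_le_compat. nra. apply Rmult_le_pos; auto. nra. apply Rmult_le_compat_r; auto. }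
      lra.
Qed.

Lemma QN_sum : QN (fun n => m2norm (m2pow (m2add P Q) n)).
Proof.
  intros eta Heta.
  pose proof L1 as HL. assert (Hq : 0 <= q) by apply m2norm_nn.
  assert (HW : 1 <= W) by (unfold W; nra).
  set (e := eta / (4 * W)).
  assert (He : 0 < e) by (unfold e; apply Rdiv_lt_0_compat; lra).
  destruct (H1 e He) as [K0 HK0].
  set (H := e^2 + e*W*q + W^2*q^2).
  assert (HH : 0 <= H) by (unfold H; assert (0 <= e*W*q) by (apply Rmult_le_pos; nra); assert (0 <= e^2) by apply pow2_ge_0; assert (0 <= W^2*q^2) by (apply Rmult_le_pos; apply pow2_ge_0); lra).
  assert (Hc : 0 < eta^2 / (8*H+1)) by (apply Rdiv_lt_0_compat; [apply pow_lt; lra | lra]).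
  destruct (pow_lt_1_zero (/2) ltac:(rewrite Rabs_pos_eq; lra) _ Hc) as [M1 HM1].
  exists (K0 + M1 + 2)%nat. intros n Hn.
  replace n with ((n - 2) + 2)%nat by lia. set (m := (n - 2)%nat).
  assert (Hm0 : (m >= K0)%nat) by (unfold m; lia).
  assert (Hm1 : (m >= M1)%nat) by (unfold m; lia).
  destruct (inv m) as [U [V [E [_ [_ [BU BV]]]]]]. simpl. rewrite E.
  set (k := INR m + 2). assert (Hk : 1 <= k) by (unfold k; pose proof (pos_INR m); lra).
  set (em := e ^ m). set (Wm := W ^ m).
  assert (Hem : 0 <= em) by (apply pow_le; lra).
  assert (HWm : 1 <= Wm) by (unfold Wm; rewrite <- (pow1 m); apply pow_incr; lra).
  assert (P2 : m2norm (m2pow P (m+2)) <= em * e^2) by (unfold em; rewrite <- pow_add; apply HK0; lia).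
  assert (P1' : m2norm (m2pow P (m+1)) <= em * e) by (unfold em; rewrite <- (pow_1 e) at 2; rewrite <- pow_add; apply HK0; lia).
  assert (P0 : m2norm (m2pow P m) <= em) by (apply HK0; lia).
  assert (F3 : L ^ (m+2) <= Wm * W).
  { apply Rle_trans with (L ^ (2 * (m+1))). apply Rle_pow; auto; lia.
    rewrite pow_sqr. fold W. unfold Wm. rewrite pow_add, pow_1. lra. }
  assert (F4 : W ^ (m+2) = Wm * W^2) by (unfold Wm; rewrite pow_add; reflexivity).
  assert (HU0 : 0 <= m2norm U) by apply m2norm_nn.
  assert (HV0 : 0 <= m2norm V) by apply m2norm_nn.
  apply Rle_trans with (em * e^2 + (em * e * (k * L^(m+2) * q) + em * (k^2 * W^(m+2) * q^2))).
  { eapply Rle_trans. apply m2norm_tri. apply Rplus_le_compat. exact P2.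
    eapply Rle_trans. apply m2norm_tri. apply Rplus_le_compat.
    - eapply Rle_trans. apply m2norm_sub. apply Rmult_le_compat; auto. apply m2norm_nn.
    - eapply Rle_trans. apply m2norm_sub. apply Rmult_le_compat; auto. apply m2norm_nn. }
  assert (A1 : e^2 <= Wm * k^2 * e^2).
  { assert (1 <= Wm * k^2) by nra. assert (0 <= e^2) by apply pow2_ge_0. nra. }
  assert (A2 : e * (k * L^(m+2) * q) <= Wm * k^2 * (e * W * q)).
  { apply Rle_trans with (e * (k * (Wm * W) * q)).
    apply Rmult_le_compat_l. lra. apply Rmult_le_compat_r; auto. apply Rmult_le_compat_l; lra.
    assert (0 <= e * Wm * W * q) by (apply Rmult_le_pos; auto; apply Rmult_le_pos; nra).
    assert (k <= k^2) by nra. nra. }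
  assert (A3 : k^2 * W^(m+2) * q^2 = Wm * k^2 * (W^2 * q^2)) by (rewrite F4; ring).
  assert (Tot : e^2 + e * (k * L^(m+2) * q) + k^2 * W^(m+2) * q^2 <= Wm * k^2 * H).
  { unfold H. lra. }
  apply Rle_trans with (em * (Wm * k^2 * H)).
  { apply Rmult_le_compat_l with (r := em) in Tot; auto. lra. }
  assert (EW : em * Wm = eta ^ m * (/4) ^ m).
  { unfold em, Wm. rewrite <- !Rpow_mult_distr. f_equal. unfold e. field. lra. }
  assert (R1 : em * (Wm * k^2 * H) = eta ^ m * ((/4)^m * k^2 * H)) by (replace (em * (Wm * k^2 * H)) with ((em * Wm) * (k^2 * H)) by ring; rewrite EW; ring). rewrite R1.
  rewrite pow_add. apply Rmult_le_compat_l. apply pow_le; lra.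
  specialize (HM1 m Hm1). rewrite Rabs_pos_eq in HM1 by (apply pow_le; lra).
  pose proof (sq_bound m) as SB. fold k in SB.
  assert (E2 : (/4)^m * 2^m = (/2)^m) by (rewrite <- Rpow_mult_distr; f_equal; field).
  assert (H4 : 0 <= (/4)^m) by (apply pow_le; lra).
  apply Rle_trans with ((/4)^m * (8 * 2^m) * H).
  { apply Rmult_le_compat_r; auto. apply Rmult_le_compat_l; auto. }
  replace ((/4)^m * (8 * 2^m) * H) with (8 * H * (/2)^m) by (rewrite <- E2; ring).
  apply Rle_trans with (8 * H * (eta ^ 2 / (8 * H + 1))).
  { apply Rmult_le_compat_l; lra. }
  apply Rmult_le_reg_r with (8 * H + 1). lra.
  replace (8 * H * (eta ^ 2 / (8 * H + 1)) * (8 * H + 1)) with (8 * H * eta^2) by (field; lra).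
  assert (0 <= eta^2) by apply pow2_ge_0. simpl pow. nra.
Qed.

End QNsum.

Lemma diag_pow {X : BanachAlg} (a d : X) n :
  m2pow (mkM2 a zero zero d) n = mkM2 (xpow a n) zero zero (xpow d n).
Proof.
  induction n.
  - reflexivity.
  - change (m2pow (mkM2 a zero zero d) (S n)) with (m2mul (mkM2 a zero zero d) (m2pow (mkM2 a zero zero d) n)).
    rewrite IHn. unfold m2mul; simpl. rewrite !m0l, !m0r, !a0l, !a0r. reflexivity.
Qed.

Lemma diag_QN {X : BanachAlg} (a d : X) :
  QN (fun n => norm (xpow a n)) -> QN (fun n => norm (xpow d n)) ->
  QN (fun n => m2norm (m2pow (mkM2 a zero zero d) n)).
Proof.
  intros Ha Hd e He. destruct (Ha e He) as [N1 H1]. destruct (Hd e He) as [N2 H2].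
  exists (max N1 N2). intros n Hn. rewrite diag_pow. unfold m2norm; simpl.
  rewrite norm0, Rplus_0_r, Rplus_0_l. apply Rmax_lub; [apply H1 | apply H2]; lia.
Qed.

Theorem corollary3p2 (X : BanachAlg) (lam : Cpx) (A B C D Ad Dd : X) :
  lam <> C0 ->
  gdrazin_in X A Ad ->
  gdrazin_in X D Dd ->
  mul B D = scal lam (mul (mul A B) (spec_idem X D Dd)) ->
  mul C A = scal lam (mul (mul D C) (spec_idem X A Ad)) ->
  mul B C = zero ->
  let M := mkM2 A B C D in
  let Pd := mkM2 Ad zero zero Dd in
  let Q := mkM2 zero B C zero in
  exists S : M2 X,
    m2_series (fun n => m2mul (m2mul (m2pow Pd (n + 2)) Q) (m2pow M n)) S /\
    m2_gdrazin M (m2add Pd S).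
Proof.
  intros Hlam Ha Hd HB HC HBC M Pd Q.
  pose proof (side1 lam A B D Dd Hd HB) as B1.
  pose proof (side2 lam A B D Dd Hd HB) as B2.
  pose proof (side5 lam A B D Ad Dd Hlam Ha Hd HB) as B5.
  pose proof (side6 lam A B D Ad Dd Hlam Ha Hd HB) as B6.
  pose proof (side1 lam D C A Ad Ha HC) as C1.
  pose proof (side2 lam D C A Ad Ha HC) as C2.
  pose proof (side5 lam D C A Dd Ad Hlam Hd Ha HC) as C5.
  pose proof (side6 lam D C A Dd Ad Hlam Hd Ha HC) as C6.
  destruct Ha as [Ac [A2 Aq]]. destruct Hd as [Dc [D2 Dq]].
  assert (PdQ : m2mul Pd Q = m2zero X).
  { unfold Pd, Q, m2mul, m2zero; simpl. rewrite B5, C5, !m0l, !m0r, !a0l. reflexivity. }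
  assert (Hu : forall n, m2mul (m2mul (m2pow Pd (n + 2)) Q) (m2pow M n) = m2zero X).
  { intros n. replace (n + 2)%nat with (S (n + 1)) by lia.
    rewrite m2pow_S_r, <- (m2A (m2pow Pd (n+1)) Pd Q), PdQ, m2m0r, m2m0l. reflexivity. }
  exists (m2zero X). split.
  - intros eps Heps. exists O. intros n _.
    assert (Hp : forall k, m2partial X (fun n => m2mul (m2mul (m2pow Pd (n + 2)) Q) (m2pow M n)) k = m2zero X).
    { induction k; cbn [m2partial]. apply Hu. rewrite IHk, Hu, m2a0l. reflexivity. }
    rewrite Hp. unfold R_dist. 
    replace (m2add (m2zero X) (m2opp (m2zero X))) with (m2zero X)
      by (unfold m2add, m2opp, m2zero; simpl; rewrite opp0, a0l; reflexivity).
    rewrite m2norm0, Rminus_0_r, Rabs_R0. exact Heps.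
  - rewrite m2a0r. unfold m2_gdrazin, is_gdrazin. split; [|split].
    + unfold M, Pd, m2mul; simpl. f_equal; repeat progress rewrite ?B5, ?C5, ?B2, ?C2, ?m0l, ?m0r, ?a0l, ?a0r; auto.
    + unfold M, Pd, m2mul; simpl. f_equal; repeat progress rewrite ?B5, ?C5, ?B2, ?C2, ?m0l, ?m0r, ?a0l, ?a0r; auto.
    + set (A1 := add A (opp (mul (mul A A) Ad))) in *.
      set (D1 := add D (opp (mul (mul D D) Dd))) in *.
      replace (m2add M (m2opp (m2mul (m2mul M M) Pd))) with (m2add (mkM2 A1 zero zero D1) Q).
      2: { unfold M, Pd, Q, m2add, m2opp, m2mul; simpl. symmetry. f_equal;
        repeat progress rewrite ?m0r, ?m0l, ?a0r, ?a0l, ?mDl, ?HBC, ?B1, ?C1, ?opp0, <- ?(mA A B Dd), <- ?(mA D C Ad), <- ?(mA C B Dd), ?B2, ?C2, ?aNr; reflexivity. }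
      unfold quasinil. apply QN_quasinil. intros; apply m2norm_nn.
      apply (QN_sum _ _ lam).
      * apply diag_QN; apply quasinil_QN; auto; intros; apply nn.
      * unfold Q, m2mul, m2scal; simpl. f_equal; repeat progress rewrite ?m0l, ?m0r, ?a0l, ?a0r, ?smr, ?s0; auto.
      * unfold Q, m2mul, m2zero; simpl. f_equal; repeat progress rewrite ?m0l, ?m0r, ?a0l, ?a0r, ?HBC, <- ?(mA C B C), ?HBC; auto. rewrite mA, HBC, m0l. reflexivity.
Qed.
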